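(* Let $G=(V,E)$ be a connected undirected graph with labeled nodes $1,\dots,n_l$ ($1\le n_l<n$) and edge costs $d_e>0$. For every $\lambda\ge0$ and every unlabeled node $p$, the flow-based prediction weights satisfy $w_i(p)\ge0$ for all $i=1,\dots,n_l$ and $\sum_{i=1}^{n_l}w_i(p)=1$. Consequently the prediction $f(p)=\sum_i w_i(p)f(i)$ lies in $[\min_i f(i),\max_i f(i)]$ (maximum principle).
   Context: Orient each edge arbitrarily; let $A$ be the $n\times m$ signed incidence matrix ($A_{ie}=+1$, $A_{je}=-1$ for $e$ oriented from $i$ to $j$), $A_l$ its rows $1,\dots,n_l$ and $A_u$ its remaining rows. For unlabeled $p$, $\vec b_p\in\mathbb R^{n-n_l}$ is zero except $-1$ at the entry of $p$. For $\lambda\ge0$, $\vec x$ is the unique minimizer of $\frac12\sum_{e=1}^m d_e(x_e^2+\lambda|x_e|)$ subject to $A_u\vec x=\vec b_p$, and $\vec w(p)=A_l\vec x$. *)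

(* Defs.v *)
From HB Require Import structures.
From mathcomp Require Import all_boot all_order all_algebra.
Set Implicit Arguments. Unset Strict Implicit. Unset Printing Implicit Defensive.
Import Order.TTheory GRing.Theory Num.Theory.
Local Open Scope ring_scope.

(* A graph on nodes 'I_n with m edges; edge e is oriented (arbitrarily)
   from [src e] to [dst e]. *)

Definition adj (n m : nat) (src dst : 'I_m -> 'I_n) : rel 'I_n :=
  fun i j => [exists e : 'I_m,
    ((src e == i) && (dst e == j)) || ((src e == j) && (dst e == i))].

Definition connected_graph (n m : nat) (src dst : 'I_m -> 'I_n) : Prop :=
  forall i j : 'I_n, connect (adj src dst) i j.

Definition incidence (R : ringType) (n m : nat) (src dst : 'I_m -> 'I_n)
  : 'M[R]_(n, m) :=
  \matrix_(i < n, e < m) ((i == src e)%:R - (i == dst e)%:R).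

Definition flow_obj (R : realFieldType) (m : nat) (d : 'I_m -> R) (lam : R)
  (x : 'cV[R]_m) : R :=
  2^-1 * \sum_(e < m) d e * (x e 0 ^+ 2 + lam * `|x e 0|).

(* feasibility: A_u x = b_p, where rows of A_u are the unlabeled nodes
   (indices >= nl) and b_p is -1 at p, 0 elsewhere *)
Definition feasible (R : realFieldType) (n m nl : nat) (src dst : 'I_m -> 'I_n)
  (p : 'I_n) (x : 'cV[R]_m) : Prop :=
  forall i : 'I_n, (nl <= i)%N ->
    (incidence R src dst *m x) i 0 = if i == p then -1 else 0.

Definition is_flow_minimizer (R : realFieldType) (n m nl : nat)
  (src dst : 'I_m -> 'I_n) (d : 'I_m -> R) (lam : R) (p : 'I_n)
  (x : 'cV[R]_m) : Prop :=
  feasible nl src dst p x /\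
  forall y : 'cV[R]_m, feasible nl src dst p y ->
    flow_obj d lam x <= flow_obj d lam y.

(* prediction weights w(p) = A_l x : entry i (for labeled i < nl) *)
Definition weight (R : ringType) (n m : nat) (src dst : 'I_m -> 'I_n)
  (x : 'cV[R]_m) (i : 'I_n) : R :=
  (incidence R src dst *m x) i 0.

(* Main.v *)
Require Import Defs.
From HB Require Import structures.
From mathcomp Require Import all_boot all_order all_algebra.
From mathcomp Require Import ring lra.
Set Implicit Arguments. Unset Strict Implicit. Unset Printing Implicit Defensive.
Import Order.TTheory GRing.Theory Num.Theory.
Local Open Scope ring_scope.

Section P.
Variables (R : realFieldType) (n m : nat) (src dst : 'I_m -> 'I_n).
Local Notation A := (incidence R src dst).

Lemma sum_ind (P : pred 'I_n) (a : 'I_n) :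
  \sum_(i | P i) ((i == a)%:R : R) = (P a)%:R.
Proof.
rewrite big_mkcond (bigD1 a) //= eqxx big1 ?addr0; last first.
  by move=> i /negbTE ->; rewrite if_same.
by case: (P a).
Qed.

Lemma sum_cut (P : pred 'I_n) (y : 'cV[R]_m) :
  \sum_(i | P i) (A *m y) i 0 =
  \sum_(e < m) y e 0 * ((P (src e))%:R - (P (dst e))%:R).
Proof.
under eq_bigr do rewrite mxE.
rewrite exchange_big /=; apply: eq_bigr => e _.
rewrite -mulr_suml mulrC; congr (_ * _).
under eq_bigr do rewrite mxE.
by rewrite sumrB !sum_ind.
Qed.

Variable x : 'cV[R]_m.
Definition fr : rel 'I_n := fun u v => [exists e : 'I_m,
  ((src e == u) && (dst e == v) && (0 < x e 0)) ||
  ((src e == v) && (dst e == u) && (x e 0 < 0))].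

Lemma path_z (v t : 'I_n) : connect fr v t ->
  exists z : 'cV[R]_m,
    (forall i, (A *m z) i 0 = (i == v)%:R - (i == t)%:R) /\
    (forall e, (x e 0 = 0 -> z e 0 = 0) /\ 0 <= x e 0 * z e 0).
Proof.
move=> /connectP [s]; elim: s v => [|u s IH] v /=.
  move=> _ ->; exists 0; split => [i|e]; first by rewrite mulmx0 mxE subrr.
  by rewrite mxE mulr0.
move=> /andP [/existsP [e He] Hp] Ht.
have [z [Hz1 Hz2]] := IH u Hp Ht.
have [s0 [Hs Hsx Hcol]] : exists s0 : R, [/\ s0 * x e 0 > 0,
    x e 0 != 0 &  forall i : 'I_n, A i e * s0 = (i == v)%:R - (i == u)%:R].
  case/orP: He => /andP [/andP [/eqP Hs /eqP Hd] Hx].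
    exists 1; split; first by rewrite mul1r.
      by rewrite gt_eqF.
    by move=> i; rewrite mxE mulr1 Hs Hd.
  exists (-1); split; first by rewrite mulN1r oppr_gt0.
    by rewrite lt_eqF.
  by move=> i; rewrite mxE Hs Hd mulrN1 opprB.
exists (\col_k (z k 0 + (k == e)%:R * s0)); split.
  move=> i; rewrite mxE.
  have Ez : forall k, (\col_k (z k 0 + (k == e)%:R * s0)) k 0 = z k 0 + (k == e)%:R * s0.
    by move=> k; rewrite mxE.
  under eq_bigr do rewrite Ez mulrDr.
  rewrite big_split /=.
  have := Hz1 i; rewrite mxE => ->.
  rewrite (bigD1 e) //= eqxx mul1r Hcol.
  rewrite big1 ?addr0; first by ring.
  by move=> k /negbTE ->; rewrite mul0r mulr0.
move=> k; rewrite mxE; have [Hz3 Hz4] := Hz2 k; split.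
  move=> Hx0; rewrite Hz3 // add0r; case: eqP => [Hk|]; last by rewrite mul0r.
  by move: Hsx; rewrite -Hk Hx0 eqxx.
rewrite mulrDr addr_ge0 //; case: eqP => [->|]; last by rewrite mul0r mulr0.
by rewrite mul1r mulrC ltW.
Qed.

Lemma term_dec (a b lam : R) : 0 <= a * b -> `|b| <= `|a| -> 0 <= lam ->
  (a - b) ^+ 2 + lam * `|a - b| <= a ^+ 2 + lam * `|a| /\
  (b != 0 -> (a - b) ^+ 2 + lam * `|a - b| < a ^+ 2 + lam * `|a|).
Proof.
move=> Hab Hb Hl.
have [ha|ha] := leP 0 a; have [hb|hb] := leP 0 b; have [hc|hc] := leP 0 (a - b);
  rewrite ?(ger0_norm ha) ?(ltr0_norm ha) ?(ger0_norm hb) ?(ltr0_norm hb)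
    ?(ger0_norm hc) ?(ltr0_norm hc) in Hb *;
  (split; [nra| move=> /negPf Hb0]);
  try (have hb' : 0 < b by rewrite lt_neqAle eq_sym Hb0 hb);
  try nra.
Qed.

Lemma improve (z : 'cV[R]_m) (d : 'I_m -> R) (lam : R) :
  (forall e, 0 < d e) -> 0 <= lam ->
  (forall e, (x e 0 = 0 -> z e 0 = 0) /\ 0 <= x e 0 * z e 0) ->
  forall e0, z e0 0 != 0 ->
  exists eps : R, 0 < eps /\ flow_obj d lam (x - eps *: z) < flow_obj d lam x.
Proof.
move=> Hd Hl Hz e0 He0.
pose M := \sum_(e < m) `|z e 0| / `|x e 0|.
have M0 : 0 <= M by apply: sumr_ge0 => e _; rewrite divr_ge0.
pose eps := (1 + M)^-1.
have eps0 : 0 < eps by rewrite invr_gt0; lra.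
exists eps; split => //.
have Hb : forall e, `|eps * z e 0| <= `|x e 0|.
  move=> e; have [Hx0|Hx0] := eqVneq (x e 0) 0.
    by rewrite ((Hz e).1 Hx0) mulr0 normr0.
  have Hle : `|z e 0| / `|x e 0| <= M.
    rewrite /M (bigD1 e) //= lerDl; apply: sumr_ge0 => k _; rewrite divr_ge0 //.
  have nx : 0 < `|x e 0| by rewrite normr_gt0.
  rewrite normrM (gtr0_norm eps0) /eps mulrC ler_pdivrMr; last lra.
  have -> : `|z e 0| = `|x e 0| * (`|z e 0| / `|x e 0|).
    by rewrite mulrC divfK // gt_eqF.
  rewrite ler_pM2l //; lra.
have Hab : forall e, 0 <= x e 0 * (eps * z e 0).
  by move=> e; rewrite mulrCA mulr_ge0 // ?(Hz e).2 // ltW.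
have Ey : forall e, (x - eps *: z) e 0 = x e 0 - eps * z e 0.
  by move=> e; rewrite !mxE.
rewrite /flow_obj ltr_pM2l; last by rewrite invr_gt0 ltr0n.
rewrite [X in X < _](bigD1 e0) // [X in _ < X](bigD1 e0) //=.
apply: ltr_leD.
  rewrite Ey ltr_pM2l //; apply: (term_dec (Hab e0) (Hb e0) Hl).2.
  by rewrite mulf_neq0 // gt_eqF.
apply: ler_sum => e _; rewrite Ey ler_pM2l //.
exact: (term_dec (Hab e) (Hb e) Hl).1.
Qed.
End P.

Theorem proposition4 (R : realFieldType) (n m nl : nat)
  (src dst : 'I_m -> 'I_n) (d : 'I_m -> R) (lam : R) (p : 'I_n)
  (x : 'cV[R]_m) :
  (1 <= nl)%N -> (nl < n)%N ->
  (forall e : 'I_m, src e != dst e) ->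
  connected_graph src dst ->
  (forall e : 'I_m, 0 < d e) ->
  0 <= lam ->
  (nl <= p)%N ->
  is_flow_minimizer nl src dst d lam p x ->
  [/\ (forall i : 'I_n, (i < nl)%N -> 0 <= weight src dst x i),
      \sum_(i < n | (i < nl)%N) weight src dst x i = 1
    & forall f : 'I_n -> R,
        let fp := \sum_(i < n | (i < nl)%N) weight src dst x i * f i in
        (exists2 i : 'I_n, (i < nl)%N & f i <= fp) /\
        (exists2 j : 'I_n, (j < nl)%N & fp <= f j)].
Proof.
move=> H1 Hnl _ _ Hd Hl Hp [Hfeas Hmin].
rewrite /weight.
set w := fun i => (incidence R src dst *m x) i 0.
have Hu : forall i : 'I_n, ~~ (i < nl)%N -> w i = - (i == p)%:R.
  move=> i; rewrite -leqNgt => /Hfeas; rewrite /w => ->.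
  by case: (i == p); rewrite ?oppr0.
have Hsum : \sum_(i < n | (i < nl)%N) w i = 1.
  have Htot := sum_cut src dst predT x.
  have E0 : \sum_(e < m) x e 0 * ((predT (src e))%:R - (predT (dst e))%:R) = 0 :> R.
    by apply: big1 => e _; rewrite subrr mulr0.
  move: Htot; rewrite E0; rewrite (bigID (fun i : 'I_n => (i < nl)%N)) /= => Htot.
  rewrite (eq_bigr _ Hu) /= sumrN sum_ind /= -leqNgt Hp in Htot.
  move: Htot; rewrite /w (_ : true%:R = 1) //; lra.
have Hpos : forall i : 'I_n, (i < nl)%N -> 0 <= w i.
  move=> i0 Hi0; rewrite leNgt; apply/negP => Hneg.
  pose S := fun u => connect (fr src dst x) u i0.
  have Hcut : 0 <= \sum_(u | S u) w u.
    rewrite /w sum_cut; apply: sumr_ge0 => e _.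
    case Hs: (S (src e)); case Ht: (S (dst e)); rewrite ?subrr ?mulr0 //=.
      rewrite subr0 mulr1 leNgt; apply/negP => Hx.
      move/negbT: Ht => /negP; apply; apply: connect_trans Hs.
      apply: connect1; apply/existsP; exists e; rewrite !eqxx Hx /=.
      by rewrite orbT.
    rewrite sub0r mulrN1 oppr_ge0 leNgt; apply/negP => Hx.
    move/negbT: Hs => /negP; apply; apply: connect_trans Ht.
    by apply: connect1; apply/existsP; exists e; rewrite !eqxx Hx.
  have /existsP [u /andP [Su Wu]] : [exists u, S u && (0 < w u)].
    apply: contraT; rewrite negb_exists => /forallP Hall.
    move: Hcut; rewrite (bigD1 i0) ?/S ?connect0 //=.
    have : \sum_(i | S i && (i != i0)) w i <= 0.
      apply: sumr_le0 => i /andP [Si _]; move: (Hall i); rewrite Si /= -leNgt.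
      done.
    lra.
  have ul : (u < nl)%N.
    rewrite ltnNge; apply/negP => Hu'; move: Wu; rewrite Hu -?leqNgt //.
    by case: (u == p) => /=; [rewrite (_ : true%:R = 1 :> R) //|]; lra.
  have uneq : u != i0 by apply/eqP => E; move: Wu; rewrite E; lra.
  have [z [Hz1 Hz2]] := path_z Su.
  have [e0 He0] : exists e0, z e0 0 != 0.
    case: (pickP (fun e => z e 0 != 0)) => [e0 He0|H0]; first by exists e0.
    move: (Hz1 u); rewrite eqxx (negbTE uneq).
    have -> : z = 0 by apply/matrixP => i j; rewrite (ord1 j) mxE; move/negbT: (H0 i); rewrite negbK => /eqP.
    rewrite mulmx0 mxE (_ : true%:R - false%:R = 1 :> R) ?subr0 //; lra.
  have [eps [eps0 Hlt]] := improve Hd Hl Hz2 He0.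
  have : flow_obj d lam x <= flow_obj d lam (x - eps *: z).
    apply: Hmin => i Hi.
    rewrite mulmxBr -scalemxAr.
    have -> : (incidence R src dst *m x - eps *: (incidence R src dst *m z)) i 0
      = (incidence R src dst *m x) i 0 - eps * (incidence R src dst *m z) i 0.
      by rewrite !mxE.
    rewrite Hz1 Hfeas //.
    have -> : (i == u) = false by apply/negbTE; apply/eqP => E; by move: Hi; rewrite E leqNgt ?ul ?Hi0.
    have -> : (i == i0) = false by apply/negbTE; apply/eqP => E; by move: Hi; rewrite E leqNgt ?ul ?Hi0.
    by rewrite subrr mulr0 subr0.
  lra.
split => // f.
have n0 : (0 < n)%N by apply: leq_trans Hnl.
pose i00 : 'I_n := Ordinal n0.
have Pi00 : (i00 < nl)%N by [].
split.
  case: (@arg_minP _ _ 'I_n i00 (fun i : 'I_n => (i < nl)%N) f Pi00) => i Hi Hmn.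
  exists i => //.
  rewrite -[f i]mulr1 -Hsum mulr_sumr; apply: ler_sum => j Hj.
  by rewrite mulrC; apply: ler_wpM2l; [apply: Hpos | apply: Hmn].
case: (@arg_maxP _ _ 'I_n i00 (fun i : 'I_n => (i < nl)%N) f Pi00) => i Hi Hmn.
exists i => //.
rewrite -[f i]mulr1 -Hsum mulr_sumr; apply: ler_sum => j Hj.
by rewrite [f i * _]mulrC; apply: ler_wpM2l; [apply: Hpos | apply: Hmn].
Qed.
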